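(* Let $\mathfrak{S}=(\mathcal{X},\mathsf{S},\gamma,(\Lambda_{a})_{a\in\mathcal{A}})$ be a spectral decomposition system for the Euclidean space $\mathfrak{H}$. Let $m\geq 1$ be an integer, let $(X_i)_{1\leq i\leq m}$ be a family in $\mathfrak{H}$, and let $(\alpha_i)_{1\leq i\leq m}$ be a family in $[0,+\infty)$. Then \[ \gamma\Big(\sum_{i=1}^m\alpha_iX_i\Big)\in\operatorname{conv}\Big(\mathsf{S}\cdot\sum_{i=1}^m\alpha_i\gamma(X_i)\Big). \]
   Context: A Euclidean space is a finite-dimensional real inner product space; inner products are written $\langle\cdot,\cdot\rangle$ and norms $\|\cdot\|$. Let $\mathfrak{H}$ and $\mathcal{X}$ be Euclidean spaces, let $\mathsf{S}$ be a group acting on $\mathcal{X}$ by linear isometries (for every $s\in\mathsf{S}$, the map $x\mapsto s\cdot x$ is a linear isometry of $\mathcal{X}$), let $\gamma\colon\mathfrak{H}\to\mathcal{X}$, and let $(\Lambda_a)_{a\in\mathcal{A}}$ be a family of linear operators from $\mathcal{X}$ to $\mathfrak{H}$. The orbit of $x\in\mathcal{X}$ is $\mathsf{S}\cdot x=\{s\cdot x: s\in\mathsf{S}\}$; a map $\tau$ on $\mathcal{X}$ is $\mathsf{S}$-invariant if $\tau(s\cdot x)=\tau(x)$ for all $s,x$. The tuple $(\mathcal{X},\mathsf{S},\gamma,(\Lambda_a)_{a\in\mathcal{A}})$ is a spectral decomposition system for $\mathfrak{H}$ if: [A] every $\Lambda_a$ is an isometry; [B] there exists an $\mathsf{S}$-invariant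 map $\tau\colon\mathcal{X}\to\mathcal{X}$ with $\tau(x)\in\mathsf{S}\cdot x$ for all $x\in\mathcal{X}$ and $\gamma\circ\Lambda_a=\tau$ for all $a\in\mathcal{A}$; [C] for every $X\in\mathfrak{H}$ there is $a\in\mathcal{A}$ with $X=\Lambda_a\gamma(X)$; [D] $\langle X,Y\rangle\leq\langle\gamma(X),\gamma(Y)\rangle$ for all $X,Y\in\mathfrak{H}$. $\operatorname{conv}$ denotes convex hull. *)

(* Defs.v *)
(* Euclidean spaces are modelled as coordinate spaces
   'rV[R]_n (R : realType) with the standard inner product. *)
From HB Require Import structures.
From mathcomp Require Import all_boot all_order all_algebra.
From mathcomp Require Import reals.
Set Implicit Arguments. Unset Strict Implicit. Unset Printing Implicit Defensive.
Import Order.TTheory GRing.Theory Num.Theory.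
Local Open Scope ring_scope.

Section Defs.
Variable R : realType.

Definition dotp (n : nat) (u v : 'rV[R]_n) : R := (u *m v^T) 0 0.

Definition is_linear_map (p n : nat) (f : 'rV[R]_p -> 'rV[R]_n) : Prop :=
  forall (a : R) (u v : 'rV[R]_p), f (a *: u + v) = a *: f u + f v.

Definition is_linear_isometry (p n : nat) (f : 'rV[R]_p -> 'rV[R]_n) : Prop :=
  is_linear_map f /\ forall x, dotp (f x) (f x) = dotp x x.

Definition is_group (G : Type) (mul : G -> G -> G) (one : G) (inv : G -> G)
  : Prop :=
  [/\ forall a b c, mul a (mul b c) = mul (mul a b) c,
      forall a, mul one a = a, forall a, mul a one = a,
      forall a, mul (inv a) a = one & forall a, mul a (inv a) = one].

Definition is_isometric_action (G : Type) (mul : G -> G -> G) (one : G)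
  (p : nat) (act : G -> 'rV[R]_p -> 'rV[R]_p) : Prop :=
  [/\ forall x, act one x = x,
      forall s t x, act (mul s t) x = act s (act t x)
    & forall s, is_linear_isometry (act s)].

Definition sorbit (G : Type) (p : nat) (act : G -> 'rV[R]_p -> 'rV[R]_p)
  (x : 'rV[R]_p) : 'rV[R]_p -> Prop := fun y => exists s, y = act s x.

Definition conv (p : nat) (A : 'rV[R]_p -> Prop) : 'rV[R]_p -> Prop :=
  fun x => exists (k : nat) (w : 'I_k -> R) (y : 'I_k -> 'rV[R]_p),
    [/\ forall i, 0 <= w i, \sum_(i < k) w i = 1, forall i, A (y i)
      & x = \sum_(i < k) w i *: y i].

Definition spectral_decomposition_system (n p : nat) (G : Type)
  (mul : G -> G -> G) (one : G) (inv : G -> G)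
  (act : G -> 'rV[R]_p -> 'rV[R]_p) (gamma : 'rV[R]_n -> 'rV[R]_p)
  (A : Type) (Lambda : A -> 'rV[R]_p -> 'rV[R]_n) : Prop :=
  [/\ is_group mul one inv,
      is_isometric_action mul one act,
      forall a, is_linear_map (Lambda a)
    & [/\ (* [A] *) forall a, is_linear_isometry (Lambda a),
      (* [B] *) exists tau : 'rV[R]_p -> 'rV[R]_p,
          [/\ forall s x, tau (act s x) = tau x,
              forall x, sorbit act x (tau x)
            & forall a x, gamma (Lambda a x) = tau x],
      (* [C] *) forall X, exists a, X = Lambda a (gamma X)
    & (* [D] *) forall X Y, dotp X Y <= dotp (gamma X) (gamma Y)]].

End Defs.

(* Main.v *)
Require Import Defs.
From HB Require Import structures.
From mathcomp Require Import all_boot all_order all_algebra.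
From mathcomp Require Import reals.
From mathcomp Require Import lra.
From mathcomp Require all_classical all_analysis.
Import Order.TTheory GRing.Theory Num.Theory.
Local Open Scope ring_scope.

Module AuxAlg.
Set Implicit Arguments. Unset Strict Implicit.
Section Alg.
Variable R : realType.

Lemma dotpE n (u v : 'rV[R]_n) : dotp u v = \sum_j u 0 j * v 0 j.
Proof. by rewrite /dotp !mxE; apply: eq_bigr => j _; rewrite mxE. Qed.

Lemma dotpC n (u v : 'rV[R]_n) : dotp u v = dotp v u.
Proof. by rewrite !dotpE; apply: eq_bigr => j _; rewrite mulrC. Qed.

Lemma dotpDl n (u v w : 'rV[R]_n) : dotp (u + v) w = dotp u w + dotp v w.
Proof. by rewrite !dotpE -big_split; apply: eq_bigr => j _; rewrite mxE mulrDl. Qed.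

Lemma dotpZl n a (u v : 'rV[R]_n) : dotp (a *: u) v = a * dotp u v.
Proof. by rewrite !dotpE mulr_sumr; apply: eq_bigr => j _; rewrite mxE mulrA. Qed.

Lemma dotp0l n (v : 'rV[R]_n) : dotp 0 v = 0.
Proof. by rewrite dotpE big1 // => j _; rewrite mxE mul0r. Qed.

Lemma dotpNl n (u v : 'rV[R]_n) : dotp (- u) v = - dotp u v.
Proof. by rewrite -scaleN1r dotpZl mulN1r. Qed.

Lemma dotpBl n (u v w : 'rV[R]_n) : dotp (u - v) w = dotp u w - dotp v w.
Proof. by rewrite dotpDl dotpNl. Qed.

Lemma dotpDr n (u v w : 'rV[R]_n) : dotp w (u + v) = dotp w u + dotp w v.
Proof. by rewrite !(dotpC w) dotpDl. Qed.
Lemma dotpZr n a (u v : 'rV[R]_n) : dotp v (a *: u) = a * dotp v u.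
Proof. by rewrite !(dotpC v) dotpZl. Qed.
Lemma dotpBr n (u v w : 'rV[R]_n) : dotp w (u - v) = dotp w u - dotp w v.
Proof. by rewrite !(dotpC w) dotpBl. Qed.

Lemma dotp_suml n (I : eqType) (r : seq I) (P : pred I) (F : I -> 'rV[R]_n) v :
  dotp (\sum_(i <- r | P i) F i) v = \sum_(i <- r | P i) dotp (F i) v.
Proof.
by apply: (big_morph (fun u => dotp u v)) => [x y|]; rewrite ?dotpDl ?dotp0l.
Qed.

Lemma dotp_ge0 n (u : 'rV[R]_n) : 0 <= dotp u u.
Proof. by rewrite dotpE sumr_ge0 // => j _; rewrite -expr2; exact: sqr_ge0. Qed.

Lemma dotp_eq0 n (u : 'rV[R]_n) : dotp u u = 0 -> u = 0.
Proof.
rewrite dotpE => /psumr_eq0P h; apply/rowP => j; rewrite mxE.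
have := h (fun i _ => ltac:(rewrite -expr2; exact: sqr_ge0)) j isT; rewrite -expr2 => /eqP; rewrite sqrf_eq0 => /eqP.
by move=> ->.
Qed.

Lemma lin0 p n (f : 'rV[R]_p -> 'rV[R]_n) : is_linear_map f -> f 0 = 0.
Proof.
move=> h; have := h 1 0 0; rewrite !scale1r addr0 => e.
by apply: (addrI (f 0)); rewrite addr0 -e.
Qed.

Lemma linD p n (f : 'rV[R]_p -> 'rV[R]_n) : is_linear_map f ->
  forall u v, f (u + v) = f u + f v.
Proof. by move=> h u v; have := h 1 u v; rewrite !scale1r. Qed.

Lemma linZ p n (f : 'rV[R]_p -> 'rV[R]_n) : is_linear_map f ->
  forall a u, f (a *: u) = a *: f u.
Proof. by move=> h a u; rewrite -[a *: u]addr0 h lin0 // addr0. Qed.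

Lemma lin_sum p n (f : 'rV[R]_p -> 'rV[R]_n) : is_linear_map f ->
  forall m (F : 'I_m -> 'rV[R]_p), f (\sum_(i < m) F i) = \sum_(i < m) f (F i).
Proof.
move=> h m F; apply: (big_morph f); [exact: linD | exact: lin0].
Qed.

Lemma iso_dotp p n (f : 'rV[R]_p -> 'rV[R]_n) : is_linear_isometry f ->
  forall u v, dotp (f u) (f v) = dotp u v.
Proof.
move=> [hl hn] u v; have := hn (u + v); rewrite linD // !dotpDl !dotpDr hn hn.
rewrite (dotpC (f v)) (dotpC v) => e.
have : 2 * dotp (f u) (f v) = 2 * dotp u v by lra.
by move/(mulfI (x:=2)); apply; rewrite pnatr_eq0.
Qed.

Lemma act_inv (G : Type) mul one inv p (act : G -> 'rV[R]_p -> 'rV[R]_p) :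
  is_group mul one inv -> is_isometric_action mul one act ->
  forall s x, act (inv s) (act s x) = x.
Proof. by move=> [_ _ _ hi _] [h1 hm _] s x; rewrite -hm hi h1. Qed.

Lemma act_adj (G : Type) mul one inv p (act : G -> 'rV[R]_p -> 'rV[R]_p) :
  is_group mul one inv -> is_isometric_action mul one act ->
  forall t z w, dotp z (act t w) = dotp (act (inv t) z) w.
Proof.
move=> hg ha t z w; case: (ha) => _ _ hi.
by rewrite -(iso_dotp (hi (inv t)) z) (act_inv hg ha).
Qed.


Definition convq p (K : 'rV[R]_p -> Prop) k (x : 'rV[R]_p) :=
  exists (w : 'I_k -> R) (y : 'I_k -> 'rV[R]_p),
    [/\ forall i, 0 <= w i, \sum_(i < k) w i = 1, forall i, K (y i)
      & x = \sum_(i < k) w i *: y i].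

Lemma carath p (K : 'rV[R]_p -> Prop) x : convq K p.+2 x -> convq K p.+1 x.
Proof.
move=> [w [y [w0 w1 yK ->]]].
pose Ym : 'M[R]_(p.+2, p) := \matrix_(i, j) y i 0 j.
pose M := row_mx Ym (const_mx 1 : 'M[R]_(p.+2, 1)).
have nf : ~~ row_free M.
  rewrite /row_free; apply/negP => /eqP e.
  by have := rank_leq_col M; rewrite e addn1 ltnn.
have [i0 nz] : exists i, row i (kermx M) != 0.
  apply/existsP; apply: contraR nf; rewrite negb_exists => /forallP h.
  rewrite -kermx_eq0; apply/eqP/row_matrixP => i; rewrite row0.
  by apply/eqP; move: (h i); rewrite negbK.
set mu := row i0 (kermx M) in nz.
have muM : mu *m M = 0 by rewrite /mu -row_mul mulmx_ker row0.
move: muM; rewrite mul_mx_row => /eqP; rewrite row_mx_eq0 => /andP [/eqP h1 /eqP h2].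
have sy : \sum_i mu 0 i *: y i = 0.
  rewrite -[RHS]h1 mulmx_sum_row; apply: eq_bigr => i _; congr (_ *: _).
  by apply/rowP => j; rewrite !mxE.
have smu : \sum_i mu 0 i = 0.
  have := congr1 (fun A : 'M[R]_(1,1) => A 0 0) h2; rewrite /= !mxE => e; rewrite -[RHS]e.
  by apply: eq_bigr => i _; rewrite !mxE mulr1.
have [i1 pos1] : exists i, 0 < mu 0 i.
  apply/existsP; apply: contraR nz; rewrite negb_exists => /forallP h.
  have hle : forall i, 0 <= - mu 0 i by move=> i; rewrite oppr_ge0 leNgt h.
  have hs : \sum_i - mu 0 i = 0 by rewrite sumrN smu oppr0.
  apply/eqP/rowP => j; rewrite [RHS]mxE.
  have := @psumr_eq0P _ _ xpredT (fun i => - mu 0 i) (fun i _ => hle i) hs j isT.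
  by move=> e; rewrite -[mu 0 j]opprK e oppr0.
pose F i := w i / mu 0 i.
have [i2 pos2 hmin] := @arg_minP _ _ _ i1 (fun i => 0 < mu 0 i) F pos1.
pose t := F i2.
have t0 : 0 <= t by rewrite /t /F divr_ge0 // ltW.
pose w' i := w i - t * mu 0 i.
have w'0 : forall i, 0 <= w' i.
  move=> i; rewrite /w' subr_ge0; case: (ltP 0 (mu 0 i)) => hi.
    by have := hmin i hi; rewrite /F -/t ler_pdivlMr // mulrC.
  by apply: le_trans (w0 i); rewrite mulr_ge0_le0.
have w'2 : w' i2 = 0.
  by rewrite /w' /t /F divfK ?subrr // gt_eqF.
have sw' : \sum_i w' i = 1.
  by rewrite /w' sumrB -mulr_sumr smu mulr0 subr0.
have sx : \sum_i w i *: y i = \sum_i w' i *: y i.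
  rewrite /w'; under [RHS]eq_bigr => i _ do rewrite scalerBl -scalerA.
  by rewrite sumrB -scaler_sumr sy scaler0 subr0.
exists (fun j => w' (lift i2 j)), (fun j => y (lift i2 j)); split => //.
- by rewrite -sw' (bigD1_ord i2) //= w'2 add0r.
- by rewrite sx (bigD1_ord i2) //= w'2 scale0r add0r.
Qed.

End Alg.

End AuxAlg.

Module AuxTop.
Import all_classical all_analysis.
Import AuxAlg.
Import numFieldTopology.Exports numFieldNormedType.Exports.
Local Open Scope classical_set_scope.
Local Open Scope ring_scope.
Set Implicit Arguments. Unset Strict Implicit.
Section Top.
Variable R : realType.

Lemma coord_cont (T : pseudoMetricType R) m n i j :
  continuous (fun M : 'M[T]_(m,n) => M i j).
Proof.
move=> /= M s /= /(nbhs_ballP (M i j)) [e e0 es].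
by apply/nbhs_ballP; exists e => //= N [_ MN]; exact/es/MN.
Qed.

Lemma cont_sum (T : topologicalType) (V : normedModType R) (I : Type)
  (r : seq I) (f : I -> T -> V) :
  (forall i, continuous (f i)) -> continuous (fun x => \sum_(i <- r) f i x).
Proof.
move=> hf; elim: r => [|a r IH].
  under eq_fun do rewrite big_nil; exact: cst_continuous.
under eq_fun do rewrite big_cons.
by move=> x; apply: continuousD; [exact: hf | exact: IH].
Qed.

Lemma cont_dotp (T : topologicalType) p (f g : T -> 'rV[R]_p) :
  continuous f -> continuous g -> continuous (fun x => dotp (f x) (g x)).
Proof.
move=> hf hg; under eq_fun do rewrite dotpE.
apply: cont_sum => j x; apply: continuousM.
  exact: (@continuous_comp _ _ _ f (fun M : 'rV[R]_p => M 0 j) x (hf x) (@coord_continuous _ _ _ 0 j (f x))).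
exact: (@continuous_comp _ _ _ g (fun M : 'rV[R]_p => M 0 j) x (hg x) (@coord_continuous _ _ _ 0 j (g x))).
Qed.


Lemma cont_fst (U V : topologicalType) : continuous (@fst U V).
Proof. by move=> x; exact: cvg_fst. Qed.
Lemma cont_snd (U V : topologicalType) : continuous (@snd U V).
Proof. by move=> x; exact: cvg_snd. Qed.

Lemma cont_id (T : topologicalType) : continuous (fun x : T => x).
Proof. by move=> x; exact: cvg_id. Qed.

End Top.

Lemma small_lemma (R : realType) (a b : R) :
  0 <= b -> (forall t : R, 0 < t -> t <= 1 -> 2 * a <= t * b) -> a <= 0.
Proof.
move=> b0 h; rewrite leNgt; apply/negP => a0.
have ab : 0 < a + b + 1 by lra.
pose t := a / (a + b + 1).
have t0 : 0 < t by rewrite /t divr_gt0.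
have ht : t * (a + b + 1) = a by rewrite /t divfK // gt_eqF.
have t1 : t <= 1 by rewrite /t ler_pdivrMr // mul1r; lra.
have := h t t0 t1; nra.
Qed.

Theorem main_aux (R : realType) (n p : nat) (G : Type)
  (mul : G -> G -> G) (one : G) (inv : G -> G)
  (act : G -> 'rV[R]_p -> 'rV[R]_p) (gamma : 'rV[R]_n -> 'rV[R]_p)
  (A : Type) (Lambda : A -> 'rV[R]_p -> 'rV[R]_n)
  (hS : spectral_decomposition_system mul one inv act gamma Lambda)
  (m : nat) (hm : (1 <= m)%N) (X : 'I_m -> 'rV[R]_n) (alpha : 'I_m -> R)
  (halpha : forall i, 0 <= alpha i) :
  Defs.conv (sorbit act (\sum_(i < m) alpha i *: gamma (X i)))
       (gamma (\sum_(i < m) alpha i *: X i)).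
Proof.
case: hS => hg ha hlin [hiso [tau [htauS htauO htauG]] hC hD].
set Y := \sum_(i < m) alpha i *: X i.
set y := gamma Y.
set z := \sum_(i < m) alpha i *: gamma (X i).
set K := sorbit act z.
have key : forall w, exists s, dotp y w <= dotp (act s z) w.
  move=> w; have [a ea] := hC Y.
  have [t et] := htauO w.
  exists (inv t); rewrite -(act_adj hg ha) -et.
  rewrite -(iso_dotp (hiso a) y w) -ea /Y dotp_suml /z dotp_suml.
  apply: ler_sum => i _; rewrite !dotpZl; apply: ler_wpM2l => //.
  by rewrite -(htauG a w); apply: hD.
have [a0 _] := hC 0.
have hisoS : forall s, is_linear_isometry (act s) by case: ha.
have Kdot : forall k, K k -> dotp k k = dotp z z.
  by move=> k [s ->]; exact: (iso_dotp (hisoS s)).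
have Kle : forall y0 k, K k -> dotp k y0 <= dotp (tau z) (tau y0).
  move=> y0 k [s ->]; rewrite -(iso_dotp (hiso a0)) -(htauS s z) -!(htauG a0).
  exact: hD.
have Kcl : closed (K : set 'rV[R]_p).
  move=> y0 cl.
  have c1 : dotp y0 y0 <= dotp (tau z) (tau y0).
    have hc : closed ((fun k => dotp k y0) @^-1` [set x | x <= dotp (tau z) (tau y0)]).
      apply: preimage_closed; last exact: closed_le.
      have hcst : continuous (fun _ : 'rV[R]_p => y0) by move=> ?; exact: cst_continuous.
      by move=> x _; exact: (@cont_dotp R 'rV[R]_p p (fun k => k) (fun _ => y0) (@cont_id _) hcst x).
    apply: hc; apply: (closureS _ cl) => k Kk; exact: Kle.
  have hcd : continuous (fun k : 'rV[R]_p => dotp k k).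
    by move=> x; exact: (@cont_dotp R 'rV[R]_p p (fun k => k) (fun k => k) (@cont_id _) (@cont_id _) x).
  have c2 : dotp y0 y0 = dotp z z.
    apply/le_anti/andP; split.
      have hc : closed ((fun k : 'rV[R]_p => dotp k k) @^-1` [set x | x <= dotp z z]).
        apply: preimage_closed; last exact: closed_le.
        by move=> x _; exact: hcd.
      apply: hc; apply: (closureS _ cl) => k Kk /=; by rewrite Kdot.
    have hc : closed ((fun k : 'rV[R]_p => dotp k k) @^-1` [set x | dotp z z <= x]).
      apply: preimage_closed; last exact: closed_ge.
      by move=> x _; exact: hcd.
    apply: hc; apply: (closureS _ cl) => k Kk /=; by rewrite Kdot.
  have [u eu] := htauO z; have [v ev] := htauO y0.
  have n1 : dotp (tau z) (tau z) = dotp z z by rewrite eu; exact: (iso_dotp (hisoS u)).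
  have n2 : dotp (tau y0) (tau y0) = dotp y0 y0 by rewrite ev; exact: (iso_dotp (hisoS v)).
  have d0 : dotp (tau z - tau y0) (tau z - tau y0) = 0.
    apply/le_anti/andP; split; last exact: dotp_ge0.
    rewrite dotpBl !dotpBr (dotpC (tau y0) (tau z)); lra.
  have e : tau z = tau y0 by apply/eqP; rewrite -subr_eq0; apply/eqP/dotp_eq0.
  exists (mul (inv v) u); case: (ha) => _ hmu _.
  by rewrite hmu -eu e ev (act_inv hg ha).
have zo : (0 : 'I_1) = ord0 by apply: val_inj.
pose M := dotp z z + 1.
have Ksub : K `<=` [set v : 'rV[R]_p | forall i, `[- M, M]%classic (v ord0 i)].
  move=> k Kk i /=; rewrite in_itv /=.
  have hk : k ord0 i ^+ 2 <= dotp z z.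
    rewrite -(Kdot k Kk) dotpE zo (bigD1 i) //= expr2 lerDl.
    by apply: sumr_ge0 => j _; rewrite -expr2 sqr_ge0.
  by apply/andP; split; rewrite /M; nra.
have cK : compact (K : set 'rV[R]_p).
  have cB := @rV_compact _ p (fun _ => `[- M, M]%classic) (fun i => @segment_compact R (- M) M).
  exact: (subclosed_compact Kcl cB Ksub).
pose q := p.+1.
pose W := [set w : 'rV[R]_q | forall i, `[0, 1]%classic (w ord0 i)] `&`
          [set w : 'rV[R]_q | \sum_i w ord0 i = 1].
have cW : compact W.
  have cB := (@rV_compact _ q (fun _ => `[(0:R), (1:R)]%classic) (fun i => @segment_compact R 0 1)).
  apply: (compact_closedI cB).
  have hs : continuous (fun w : 'rV[R]_q => \sum_i w ord0 i).
    by apply: cont_sum => i x; exact: coord_continuous.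
  have := @preimage_closed _ _ (fun w : 'rV[R]_q => \sum_i w ord0 i) [set x | x = 1] (fun x _ => hs x) (@closed_eq R 1).
  exact.
pose P := [set v : 'rV['rV[R]_p]_q | forall i, K (v ord0 i)].
have cP : compact P.
  exact: (@rV_compact 'rV[R]_p q (fun _ => K) (fun _ => cK)).
pose Dom := W `*` P.
have cD : compact Dom by exact: compact_setX.
pose S (wv : 'rV[R]_q * 'rV['rV[R]_p]_q) := \sum_i wv.1 ord0 i *: wv.2 ord0 i.
pose F wv := dotp (y - S wv) (y - S wv).
have c1 : forall i, continuous (fun wv : 'rV[R]_q * 'rV['rV[R]_p]_q => wv.1 ord0 i).
  move=> i x; apply: (@continuous_comp _ _ _ fst (fun w : 'rV[R]_q => w ord0 i) x).
    exact: cont_fst.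
  exact: coord_continuous.
have c2 : forall i, continuous (fun wv : 'rV[R]_q * 'rV['rV[R]_p]_q => wv.2 ord0 i).
  move=> i x; apply: (@continuous_comp _ _ _ snd (fun w : 'rV['rV[R]_p]_q => w ord0 i) x).
    exact: cont_snd.
  exact: coord_cont.
have hSc : continuous S.
  apply: cont_sum => i x; apply: continuousZ; [exact: c1 | exact: c2].
have hF : continuous F.
  have hyS : continuous (fun wv => y - S wv).
    by move=> x; apply: continuousB; [exact: cst_continuous | exact: hSc].
  exact: (cont_dotp hyS hyS).
have Kz : K z by exists one; case: (ha) => h1 _ _; rewrite h1.
have Dne : Dom !=set0.
  exists (\row_i ((i == ord0)%:R : R), const_mx z); split; [split|] => /=.
  - by move=> i; rewrite mxE in_itv /=; case: (i == ord0); rewrite ?ler01 ?lexx.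
  - rewrite (bigD1 ord0) //= big1 => [|i /negbTE hi]; rewrite !mxE ?hi //.
    by rewrite eqxx addr0.
  - by move=> i; rewrite mxE.
have [[w0 v0] D0 hmin] := compact_EVT_min Dne cD (continuous_subspaceT hF).
have [[Ww Ws] Pv] := set_mem D0.
pose c0 := S (w0, v0).
have w0ge : forall i, 0 <= w0 ord0 i.
  by move=> i; have := Ww i; rewrite /= in_itv /= => /andP [].
have c0conv : convq K q c0.
  by exists (fun i => w0 ord0 i), (fun i => v0 ord0 i); split.
have minconv : forall x, convq K q x -> dotp (y - c0) (y - c0) <= dotp (y - x) (y - x).
  move=> x [w' [y' [h0 h1' hK ->]]].
  have hDm : (\row_i w' i, \row_i y' i) \in Dom.
    apply: mem_set; split; [split|] => /=.
    - by move=> i; rewrite mxE in_itv /= h0 /= -h1' (bigD1 i) //= lerDl sumr_ge0.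
    - by under eq_bigr do rewrite mxE.
    - by move=> i; rewrite mxE.
  have := hmin _ hDm; rewrite /F /S /c0 /=.
  by under [in X in _ <= X -> _]eq_bigr do rewrite !mxE.
have hw : forall i : 'I_q, (widen_ord (leqnSn q) i == ord_max) = false.
  by move=> i; apply/negbTE; rewrite -val_eqE /= neq_ltn ltn_ord.
have hin : forall i : 'I_q, inord (widen_ord (leqnSn q) i) = i.
  by move=> i; apply: val_inj; rewrite /= inordK.
have var : forall k, K k -> dotp (y - c0) (k - c0) <= 0.
  move=> k Kk; apply: (@small_lemma R _ (dotp (k - c0) (k - c0))); first exact: dotp_ge0.
  move=> t t0 t1.
  have hx : convq K q ((1 - t) *: c0 + t *: k).
    apply: carath.
    exists (fun i : 'I_q.+1 => if i == ord_max then t else (1 - t) * w0 ord0 (inord i)).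
    exists (fun i : 'I_q.+1 => if i == ord_max then k else v0 ord0 (inord i)).
    split.
    - move=> i; case: ifP => _; first exact: ltW.
      by apply: mulr_ge0; [rewrite subr_ge0 | exact: w0ge].
    - rewrite big_ord_recr /= eqxx; under eq_bigr do rewrite hw hin.
      by rewrite -mulr_sumr Ws mulr1 subrK.
    - by move=> i; case: ifP.
    - rewrite big_ord_recr /= eqxx; under eq_bigr do rewrite hw hin.
      rewrite /c0 /S /= scaler_sumr; congr (_ + _).
      by apply: eq_bigr => i _; rewrite scalerA.
  have := minconv _ hx.
  have -> : y - ((1 - t) *: c0 + t *: k) = (y - c0) - t *: (k - c0).
    by apply/rowP => j; rewrite !mxE; lra.
  move: (y - c0) (k - c0) => d e.
  rewrite !dotpBl !dotpBr !dotpZl !dotpZr (dotpC e d) => h.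
  have : t * (2 * dotp d e) <= t * (t * dotp e e) by lra.
  by rewrite ler_pM2l.
have [s hs] := key (y - c0).
have Kk : K (act s z) by exists s.
have hv := var _ Kk.
have d0 : y - c0 = 0.
  apply: dotp_eq0; apply/le_anti/andP; split; last exact: dotp_ge0.
  have e1 : dotp (y - c0) (y - c0) = dotp y (y - c0) - dotp c0 (y - c0) by rewrite dotpBl.
  have e2 : dotp (y - c0) (act s z - c0) = dotp (act s z) (y - c0) - dotp c0 (y - c0).
    by rewrite dotpBr !(dotpC (y - c0)).
  lra.
have -> : y = c0 by apply/eqP; rewrite -subr_eq0 d0.
by exists q.
Qed.

End AuxTop.

Theorem theorem3p9 (R : realType) (n p : nat) (G : Type)
  (mul : G -> G -> G) (one : G) (inv : G -> G)
  (act : G -> 'rV[R]_p -> 'rV[R]_p) (gamma : 'rV[R]_n -> 'rV[R]_p)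
  (A : Type) (Lambda : A -> 'rV[R]_p -> 'rV[R]_n)
  (hS : spectral_decomposition_system mul one inv act gamma Lambda)
  (m : nat) (hm : (1 <= m)%N) (X : 'I_m -> 'rV[R]_n) (alpha : 'I_m -> R)
  (halpha : forall i, 0 <= alpha i) :
  conv (sorbit act (\sum_(i < m) alpha i *: gamma (X i)))
       (gamma (\sum_(i < m) alpha i *: X i)).
Proof.
exact: (@AuxTop.main_aux R n p G mul one inv act gamma A Lambda hS m hm X alpha halpha).
Qed.
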